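(* Let $\mathbb{F}\subset\mathbb{C}$ be a field, $k\in\mathbb{N}$ with $k\ge2$, and $P\in\mathbb{Q}[x]$ a polynomial of degree $k$ with derivative $P'$. If an additive function $a\colon\mathbb{F}\to\mathbb{C}$ satisfies \[ a(P(x))=P'(x)\,a(x)\qquad(x\in\mathbb{F}), \] then $a$ is a derivation, i.e. $a(xy)=x\,a(y)+a(x)\,y$ for all $x,y\in\mathbb{F}$.
   Context: A function $a\colon\mathbb{F}\to\mathbb{C}$ is additive if $a(x+y)=a(x)+a(y)$ for all $x,y\in\mathbb{F}$; a derivation is an additive function satisfying the Leibniz rule $a(xy)=x\,a(y)+a(x)\,y$. *)

(* Defs.v *)
From mathcomp Require Import all_boot all_algebra complex reals.
Import GRing.Theory Num.Theory.
Local Open Scope ring_scope.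

(* The complex numbers are modelled as R[i] = complex R over a realType R
   (any realType is a complete archimedean ordered field, i.e. the reals). *)

Definition additive_on {C : nzRingType} (F : {pred C}) (a : C -> C) : Prop :=
  {in F &, forall x y, a (x + y) = a x + a y}.

Definition derivation_on {C : nzRingType} (F : {pred C}) (a : C -> C) : Prop :=
  additive_on F a /\ {in F &, forall x y, a (x * y) = x * a y + a x * y}.

(* Main.v *)
Require Import Defs.
From mathcomp Require Import all_boot all_algebra complex reals ring zify.
Import GRing.Theory Num.Theory.
Local Open Scope ring_scope.
Set Implicit Arguments. Unset Strict Implicit.

Lemma cl_all (C : fieldType) (F : {pred C}) : GRing.divring_closed F ->
  [/\ 0 \in F, 1 \in F, {in F, forall x, - x \in F}, {in F &, forall x y, x + y \in F}
   & {in F &, forall x y, x * y \in F}].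
Proof.
case=> F1 FB FV.
have F0 : 0 \in F by rewrite -(subrr 1); apply: (FB).
have FN : {in F, forall x, - x \in F} by move=> x Fx; rewrite -sub0r; apply: (FB).
split => //.
- by move=> x y Fx Fy; rewrite -(opprK y); apply: (FB) => //; apply: (FN).
- move=> x y Fx Fy. have Fy' : 1 / y \in F by apply: (FV).
  have := FV _ _ Fx Fy'. by rewrite div1r invrK.
Qed.

Lemma cl_nat (C : fieldType) (F : {pred C}) : GRing.divring_closed F ->
  forall n : nat, n%:R \in F.
Proof.
move=> hF; have [F0 F1 FN FD FM] := cl_all hF.
by elim=> [|n IH] //; rewrite -addn1 natrD; apply: (FD).
Qed.

Lemma cl_int (C : fieldType) (F : {pred C}) : GRing.divring_closed F ->
  forall z : int, z%:~R \in F.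
Proof.
move=> hF; have [F0 F1 FN FD FM] := cl_all hF.
case=> n; first exact: cl_nat.
by rewrite NegzE mulrNz; apply: (FN); apply: (cl_nat hF).
Qed.

Lemma cl_rat (C : fieldType) (F : {pred C}) : GRing.divring_closed F ->
  forall q : rat, ratr q \in F.
Proof.
move=> hF q; have := hF; case=> _ _ FV.
by rewrite /ratr; apply: (FV); apply: (cl_int hF).
Qed.

Lemma cl_poly (C : fieldType) (F : {pred C}) : GRing.divring_closed F ->
  forall (p : {poly rat}) x, x \in F -> (map_poly ratr p).[x] \in F.
Proof.
move=> hF p x Fx; have [F0 F1 FN FD FM] := cl_all hF.
rewrite horner_coef.
apply: (big_ind (fun y => y \in F)) => //.
move=> i _; apply: (FM). rewrite coef_map_id0. apply: (cl_rat hF). by rewrite /ratr; simpl; rewrite mul0r.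
elim: (nat_of_ord i) => [|n IH]; first by rewrite expr0.
by rewrite exprS; apply: (FM).
Qed.


Lemma a0 (C : fieldType) (F : {pred C}) (a : C -> C) : GRing.divring_closed F ->
  additive_on F a -> a 0 = 0.
Proof.
move=> hF hA; have [F0 F1 FN FD FM] := cl_all hF.
have := hA 0 0 F0 F0; rewrite addr0 => /(congr1 (fun t => t - a 0)).
by rewrite subrr addrK => /esym.
Qed.

Lemma aN (C : fieldType) (F : {pred C}) (a : C -> C) : GRing.divring_closed F ->
  additive_on F a -> {in F, forall x, a (- x) = - a x}.
Proof.
move=> hF hA x Fx; have [F0 F1 FN FD FM] := cl_all hF.
have := hA x (- x) Fx (FN x Fx); rewrite subrr (a0 hF hA) => /eqP.
by rewrite eq_sym addr_eq0 => /eqP ->; rewrite opprK.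
Qed.

Lemma aMn (C : fieldType) (F : {pred C}) (a : C -> C) : GRing.divring_closed F ->
  additive_on F a -> forall n, {in F, forall x, a (x *+ n) = a x *+ n}.
Proof.
move=> hF hA n x Fx; have [F0 F1 FN FD FM] := cl_all hF.
elim: n => [|n IH]; first by rewrite !mulr0n (a0 hF hA).
have Fxn : x *+ n \in F by rewrite -mulr_natr; apply: (FM) => //; apply: (cl_nat hF).
by rewrite !mulrS hA // IH.
Qed.

Lemma aMz (C : fieldType) (F : {pred C}) (a : C -> C) : GRing.divring_closed F ->
  additive_on F a -> forall z, {in F, forall x, a (x *~ z) = a x *~ z}.
Proof.
move=> hF hA z x Fx; have [F0 F1 FN FD FM] := cl_all hF.
case: z => n; first exact: (aMn hF hA).
rewrite !NegzE !mulrNz (aN hF hA) ?(aMn hF hA) //.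
by rewrite -pmulrn -mulr_natr; apply: (FM) => //; apply: (cl_nat hF).
Qed.

Lemma aQ (C : numFieldType) (F : {pred C}) (a : C -> C) : GRing.divring_closed F ->
  additive_on F a -> forall q, {in F, forall x, a (ratr q * x) = ratr q * a x}.
Proof.
move=> hF hA q x Fx; have [F0 F1 FN FD FM] := cl_all hF.
have Fqx : ratr q * x \in F by apply: (FM) => //; apply: (cl_rat hF).
have dn0 : (denq q)%:~R != 0 :> C by rewrite intr_eq0 denq_neq0.
apply: (mulfI dn0).
rewrite mulrzl -(aMz hF hA) // -mulrzl mulrA.
have -> : (denq q)%:~R * ratr q = (numq q)%:~R :> C.
  by rewrite /ratr mulrC divfK.
rewrite mulrA [_ * ratr q]mulrC /ratr divfK //.
by rewrite mulrzl (aMz hF hA) // mulrzl.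
Qed.

Lemma asum (C : fieldType) (F : {pred C}) (a : C -> C) : GRing.divring_closed F ->
  additive_on F a -> forall n (f : 'I_n -> C), (forall i, f i \in F) ->
  a (\sum_(i < n) f i) = \sum_(i < n) a (f i).
Proof.
move=> hF hA n f Ff; have [F0 F1 FN FD FM] := cl_all hF.
elim: n f Ff => [|n IH] f Ff; first by rewrite !big_ord0 (a0 hF hA).
rewrite !big_ord_recr /= hA ?IH //.
by elim/big_ind: _ => // ? ? ? ?; apply: (FD).
Qed.

Lemma poly_nat_eq (C : numFieldType) (p q : {poly C}) :
  (forall n : nat, p.[n%:R] = q.[n%:R]) -> p = q.
Proof.
move=> H; apply/eqP; rewrite -subr_eq0; apply/negPn/negP => nz.
have := max_poly_roots (rs := [seq i%:R | i <- iota 0 (size (p - q))]) nz.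
rewrite size_map size_iota ltnn => h; suff : false by []; apply: h.
- by apply/allP => y /mapP [i _ ->]; rewrite /root hornerD hornerN H subrr.
- rewrite map_inj_uniq ?iota_uniq // => i j /eqP; rewrite eqr_nat => /eqP.
  done.
Qed.

Lemma horner3 (C : nzRingType) (p : {poly C}) x : (size p <= 3)%N ->
  p.[x] = p`_0 + p`_1 * x + p`_2 * x ^+ 2.
Proof.
move=> sp; rewrite (horner_coef_wide x sp) !big_ord_recr big_ord0 /=.
by rewrite add0r expr0 mulr1 expr1.
Qed.

Lemma polar (C : numFieldType) (F : {pred C}) (a : C -> C) : GRing.divring_closed F ->
  additive_on F a -> (forall x, x \in F -> a (x * x) = (x * a x) *+ 2) ->
  derivation_on F a.
Proof.
move=> hF hA sq; have [F0 F1 FN FD FM] := cl_all hF.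
split => // x y Fx Fy.
have := sq (x + y) (FD _ _ Fx Fy).
have -> : (x + y) * (x + y) = x * x + ((x * y) *+ 2 + y * y).
  by rewrite mulr2n; ring.
have Fxy := FM _ _ Fx Fy.
have Fxx := FM _ _ Fx Fx; have Fyy := FM _ _ Fy Fy.
have Fxy2 : x * y *+ 2 \in F by rewrite mulr2n; apply: (FD).
rewrite (hA _ _ Fxx) ?FD // (hA _ _ Fxy2 Fyy) (aMn hF hA _ Fxy) (hA _ _ Fx Fy) (sq _ Fx) (sq _ Fy).
rewrite !mulr2n => /eqP; rewrite -subr_eq0 => /eqP H.
have n2 : (2%:R : C) != 0 by rewrite pnatr_eq0.
apply: (mulfI n2); apply/eqP; rewrite -subr_eq0; apply/eqP.
rewrite -H; ring.
Qed.

Lemma binc (j : nat) : ('C(j.+2, j) * 2 = j.+2 * j.+1)%N.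
Proof.
have := @bin_sub j.+2 2 isT; rewrite subSS subn1 /= => ->.
elim: j => [|j IH] //.
rewrite binS bin1 mulnDl IH. lia.
Qed.

Lemma nder_eval (C : nzRingType) (p : {poly C}) n x : (size p <= n + 3)%N ->
  p^`N(n).[x] = p`_n + (p`_(n + 1) *+ 'C(n + 1, n)) * x + (p`_(n + 2) *+ 'C(n + 2, n)) * x ^+ 2.
Proof.
move=> sp; rewrite horner3; last first.
  rewrite /nderivn; apply: leq_trans (size_poly _ _) _; lia.
by rewrite !coef_nderivn addn0 binn mulr1n.
Qed.

Theorem mainTheorem5 (R : realType) (F : {pred R[i]}) (k : nat) (P : {poly rat})
    (a : R[i] -> R[i]) :
  GRing.divring_closed F ->
  (2 <= k)%N ->
  size P = k.+1 ->
  additive_on F a ->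
  (forall x, x \in F -> a ((map_poly ratr P).[x]) = (map_poly ratr P^`()).[x] * a x) ->
  derivation_on F a.
Proof.
move=> hF k2 sP hA hE.
have [F0 F1 FN FD FM] := cl_all hF.
apply: (polar hF hA) => x Fx.
case: k k2 sP hE => [|[|j]] // _ sP hE.
pose Q := map_poly (ratr : rat -> R[i]) P.
have sQ : size Q = j.+3 by rewrite size_map_poly.
have sP' : size P^`() = j.+2 by rewrite polyorder.size_deriv sP.
have sQ' : size Q^`() = j.+2 by rewrite deriv_map size_map_poly.
have FQ := cl_poly hF.
have Fmn : forall y m, y \in F -> y *+ m \in F.
  by move=> y m Fy; rewrite -mulr_natr; apply: (FM) => //; apply: (cl_nat hF).
have FnQ : forall i, (Q^`N(i)).[x] \in F by move=> i; rewrite nderivn_map; apply: FQ.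
pose b i := a (Q^`N(i)).[x].
pose T i := (Q^`()^`N(i)).[x].
pose p' := \poly_(i < j.+2) T i.
have eqLR : \poly_(i < j.+3) b i = p' * (a x)%:P + p' * 'X * (a 1)%:P.
  apply: poly_nat_eq => n.
  have Fn : n%:R \in F := cl_nat hF n.
  have := hE (x + n%:R) (FD _ _ Fx Fn).
  rewrite -deriv_map -/Q (nderiv_taylor Q (mulrC x n%:R)) (nderiv_taylor Q^`() (mulrC x n%:R)) sQ sQ'.
  rewrite (asum hF hA); last by move=> i; rewrite -natrX mulr_natr; apply: Fmn.
  rewrite (hA _ _ Fx Fn) (aMn hF hA n F1) => E.
  rewrite horner_poly.
  have -> : \sum_(i < j.+3) b i * n%:R ^+ i = \sum_(i < j.+3) a (Q^`N(i).[x] * n%:R ^+ i).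
    by apply: eq_bigr => i _; rewrite -!natrX !mulr_natr (aMn hF hA _ (FnQ i)).
  rewrite E !hornerE horner_poly.
  rewrite -mulr_natr /T. ring.
have coefR : forall i, (p' * (a x)%:P + p' * 'X * (a 1)%:P)`_i =
    p'`_i * a x + (if i == 0%N then 0 else p'`_i.-1) * a 1.
  by move=> i; rewrite coefD !coefMC coefMX.
have QP : forall i, Q`_i = ratr P`_i by move=> i; rewrite coef_map.
have Q'P : forall i, Q^`()`_i = ratr P`_i.+1 *+ i.+1 by move=> i; rewrite coef_deriv QP.
have Qhi : forall i, (j.+3 <= i)%N -> Q`_i = 0 by move=> i hi; rewrite nth_default // sQ.
have Q'hi : forall i, (j.+2 <= i)%N -> Q^`()`_i = 0 by move=> i hi; rewrite nth_default // sQ'.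
have Fr := cl_rat hF.
have cne : ratr P`_j.+2 != 0 :> R[i].
  have -> : j.+2 = (size P).-1 by rewrite sP.
  by rewrite fmorph_eq0 -lead_coefE lead_coef_eq0 -size_poly_eq0 sP.
have a1 : a 1 = 0.
  have := congr1 (fun p : {poly R[i]} => p`_j.+2) eqLR; rewrite /= coefR coef_poly ltnSn coef_poly ltnn /=.
  rewrite coef_poly ltnSn /b /T (@nder_eval _ Q j.+2 x); last by rewrite sQ; lia.
  rewrite (@nder_eval _ Q^`() j.+1 x); last by rewrite sQ'; lia.
  have e1 : Q`_(j.+2 + 1) = 0 by apply: Qhi; lia.
  have e2 : Q`_(j.+2 + 2) = 0 by apply: Qhi; lia.
  have e3 : Q^`()`_(j.+1 + 1) = 0 by apply: Q'hi; lia.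
  have e4 : Q^`()`_(j.+1 + 2) = 0 by apply: Q'hi; lia.
  rewrite e1 e2 e3 e4 !mul0rn !mul0r !addr0 add0r QP Q'P.
  rewrite -{1}[ratr P`_j.+2]mulr1 (aQ hF hA) // => /eqP; rewrite -subr_eq0 => /eqP e.
  have : ratr P`_j.+2 * a 1 * (j.+1)%:R = 0.
    apply/eqP; rewrite -oppr_eq0; apply/eqP; rewrite -e mulrnAl [(_ * a 1) *+ _]mulrSr opprD addrCA subrr addr0 mulr_natr; by [].
  move/eqP; rewrite mulf_eq0 pnatr_eq0 orbF mulf_eq0 (negPf cne) /= => /eqP //.
have aR0 : forall q, a (ratr q) = 0.
  by move=> q; rewrite -[ratr q]mulr1 (aQ hF hA) // a1 mulr0.
have aT : forall q m y, y \in F -> a ((ratr q *+ m) * y) = ratr q * (a y *+ m).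
  by move=> q m y Fy; rewrite mulrnAl -mulrnAr (aQ hF hA) ?(aMn hF hA) //; apply: Fmn.
have Fx2 : x ^+ 2 \in F by rewrite expr2; apply: (FM).
have FT : forall q m y, y \in F -> (ratr q *+ m) * y \in F.
  by move=> q m y Fy; apply: (FM) => //; apply: Fmn.
have := congr1 (fun p : {poly R[i]} => p`_j) eqLR; rewrite /= coefR a1 mulr0 addr0 !coef_poly.
have l3 : (j < j.+3)%N by lia.
have l2 : (j < j.+2)%N by lia.
rewrite l3 l2 /b /T (@nder_eval _ Q j x); last by rewrite sQ; lia.
rewrite (@nder_eval _ Q^`() j x); last by rewrite sQ'; lia.
have e4 : Q^`()`_(j + 2) = 0 by apply: Q'hi; lia.
rewrite e4 mul0rn mul0r addr0 !QP !Q'P !addn1 !addn2 binSn.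
rewrite (hA _ _ (FD _ _ (Fr _) (FT _ _ _ Fx)) (FT _ _ _ Fx2)) (hA _ _ (Fr _) (FT _ _ _ Fx)).
rewrite aR0 add0r !aT //.
rewrite -mulrnA -binc => E.
set c1 := ratr P`_j.+1 in E; set c2 := ratr P`_j.+2 in E cne.
set B := 'C(j.+2, j) in E.
have key : c2 * B%:R * (a (x ^+ 2) - x * a x * 2%:R) = 0.
  rewrite -(subrr (c1 * (a x *+ j.+1) + c2 * (a (x ^+ 2) *+ B))) {2}E.
  ring.
have Bn : (B != 0)%N by have := binc j; rewrite -/B; case: (B).
move/eqP: key; rewrite mulf_eq0 mulf_eq0 (negPf cne) pnatr_eq0 (negPf Bn) /= subr_eq0.
by move/eqP; rewrite expr2 mulr_natr.
Qed.
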